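(* Let $G$ be a finite group, $m\ge2$, $H$ a normal subgroup of $G$ of exponent $m-1$, and $K$ a normal subgroup of $G$ such that $G=HK$ and $M(G,H,K)$ is trivial. If $d^\wedge_m(H,K)=\frac{2p-1}{p^2}$ for some prime $p$, then $p$ divides $|G|$. If moreover $p$ is the smallest prime divisor of $|G|$, then $|H:C_H(K)|=|K:C_K(H)|=p$, and hence $H\ne K$. In particular, if $d^\wedge_m(H,K)=\frac34$, then $|H:C_H(K)|=|K:C_K(H)|=2$.
   Context: All groups are finite; ${}^g x=gxg^{-1}$, $[x,y]=xyx^{-1}y^{-1}$. For normal subgroups $H,K$ of $G$, $H\wedge K$ is the group generated by symbols $h\wedge k$ ($h\in H,k\in K$) subject to $hh'\wedge k=({}^h h'\wedge {}^h k)(h\wedge k)$, $h\wedge kk'=(h\wedge k)({}^k h\wedge {}^k k')$, $y\wedge y=1$ for $y\in H\cap K$; $M(G,H,K)$ is the kernel of the epimorphism $H\wedge K\to[H,K]$, $h\wedge k\mapsto[h,k]$. $d^\wedge_m(H,K)=|\{(h,k)\in H\times K:h^m\wedge k=1\}|/(|H||K|)$. $C_H(K)=\{h\in H: hk=kh\ \forall k\in K\}$ and $C_K(H)$ analogously. *)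

(* Defs.v *)
From Stdlib Require Import ClassicalEpsilon.
From HB Require Import structures.
From mathcomp Require Import all_boot all_order all_algebra all_fingroup all_solvable.
Set Implicit Arguments. Unset Strict Implicit. Unset Printing Implicit Defensive.
Import GRing.Theory.

Local Open Scope group_scope.

Definition pbool (P : Prop) : bool :=
  if excluded_middle_informative P then true else false.

(* Paper's conventions: left conjugation ^g x = g x g^-1 and
   commutator [x,y] = x y x^-1 y^-1 (MathComp uses the right-handed ones). *)
Definition lconj (gT : finGroupType) (g x : gT) : gT := g * x * g^-1.
Definition lcomm (gT : finGroupType) (x y : gT) : gT := x * y * x^-1 * y^-1.

(* An exterior pairing of normal subgroups H, K (of some ambient group)
   into a group L: a map satisfying the defining relations of H /\ K. *)
Definition exterior_pairing (gT L : finGroupType) (H K : {set gT})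
    (f : gT -> gT -> L) : Prop :=
  [/\ (forall h h' k, h \in H -> h' \in H -> k \in K ->
         f (h * h') k = f (lconj h h') (lconj h k) * f h k),
      (forall h k k', h \in H -> k \in K -> k' \in K ->
         f h (k * k') = f h k * f (lconj k h) (lconj k k'))
    & (forall y, y \in H :&: K -> f y y = 1)].

(* Words in the generators h /\ k: each letter is (inverted?, (h, k)). *)
Definition word_on (gT : finGroupType) (H K : {set gT})
    (w : seq (bool * (gT * gT))) : Prop :=
  forall a, a \in w -> (a.2.1 \in H) /\ (a.2.2 \in K).

Definition eval_word (gT L : finGroupType) (f : gT -> gT -> L)
    (w : seq (bool * (gT * gT))) : L :=
  \prod_(a <- w) (if a.1 then (f a.2.1 a.2.2)^-1 else f a.2.1 a.2.2).

(* The word w represents the identity of the nonabelian exterior product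
   H /\ K: it is killed by every exterior pairing (H /\ K is finite when H, K
   are finite, so it suffices to test pairings into finite groups). *)
Definition wedge_trivial (gT : finGroupType) (H K : {set gT})
    (w : seq (bool * (gT * gT))) : Prop :=
  forall (L : finGroupType) (f : gT -> gT -> L),
    exterior_pairing H K f -> eval_word f w = 1.

(* M(G,H,K) = ker (H /\ K -> [H,K], h /\ k |-> [h,k]) is trivial. *)
Definition M_trivial (gT : finGroupType) (G H K : {set gT}) : Prop :=
  forall w, word_on H K w -> eval_word (@lcomm gT) w = 1 -> wedge_trivial H K w.

Definition dwedge (gT : finGroupType) (m : nat) (H K : {set gT}) : rat :=
  (#|[set x in setX H K | pbool (wedge_trivial H K [:: (false, ((x.1 ^+ m)%g, x.2))])]|%:R
    / (#|H| * #|K|)%:R)%R.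

(* Main.v *)
Require Import Defs.
From Stdlib Require Import ClassicalEpsilon.
From HB Require Import structures.
From mathcomp Require Import all_boot all_order all_algebra all_fingroup all_solvable.
From mathcomp Require Import zify.
Import GRing.Theory Num.Theory.
Local Open Scope group_scope.

Lemma card_setI_sum (T : finType) (A B : {set T}) :
  #|A :&: B| = (\sum_(x in A) (x \in B))%N.
Proof.
rewrite -sum1_card (eq_bigl (fun x => (x \in A) && (x \in B))); last by move=> x; rewrite inE.
by rewrite big_mkcondr; apply: eq_bigr => x _; case: (x \in B).
Qed.

Definition cnt (gT : finGroupType) (X Y : {set gT}) : nat := \sum_(x : gT | x \in X) #|(Y :&: 'C[x])%g|.

Arguments cnt {gT}.
Lemma cnt_sym (gT : finGroupType) (X Y : {set gT}) : cnt X Y = cnt Y X.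
Proof.
rewrite /cnt.
under eq_bigr => x _ do rewrite card_setI_sum.
under [in RHS]eq_bigr => x _ do rewrite card_setI_sum.
rewrite exchange_big /=; apply: eq_bigr => y _; apply: eq_bigr => x _.
by rewrite cent1C.
Qed.

Lemma arith (p a c N : nat) : (1 < p)%N -> (0 < c)%N -> (N * p ^ 2 = p.*2.-1 * (c * a))%N ->
  (p * N <= c * a + (p - 1) * c)%N -> (c <= N)%N -> (1 < a)%N && (a <= p)%N.
Proof.
move=> p1 c0 E U L.
have h1 : (p * (p * N) <= p * (c * a + (p - 1) * c))%N by rewrite leq_pmul2l //; lia.
have E' : (p * (p * N) = p.*2.-1 * (c * a))%N by rewrite -E; nia.
rewrite E' in h1; clear E.
apply/andP; split.
  case: a U E' h1 => [|[|a]] //; first by nia.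
  move=> _ E _.
  have : (c * (p * p) <= p.*2.-1 * c)%N.
    by rewrite muln1 in E; rewrite mulnC -E mulnA leq_mul2l L orbT.
  rewrite mulnC leq_pmul2r //; nia.
move: h1.
have -> : p.*2.-1 = p + (p - 1) by lia.
rewrite mulnDl mulnDr leq_add2l.
have -> : (p * ((p - 1) * c) = (p - 1) * (c * p))%N by rewrite mulnCA [(c * p)%N]mulnC.
rewrite leq_pmul2l ?leq_pmul2l //; lia.
Qed.

Arguments arith {p a c N}.

Lemma index_p (gT : finGroupType) (G X Y : {group gT}) p :
  X \subset G -> Y \subset G -> prime p -> pdiv #|G| = p ->
  (cnt X Y * p ^ 2 = p.*2.-1 * (#|X| * #|Y|))%N -> #|X : 'C_X(Y)| = p.
Proof.
move=> sXG sYG pp pG E.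
have p1 := prime_gt1 pp.
set A := 'C_X(Y).
have sAX : A \subset X by apply: subsetIl.
have up : forall x, x \in X ->
   (p * #|Y :&: 'C[x]| <= #|Y| + (p - 1) * #|Y| * (x \in A))%N.
  move=> x xX; case xA: (x \in A).
    have : Y \subset 'C[x] by rewrite sub_cent1; move: xA; rewrite inE => /andP[].
    move/setIidPl => ->; rewrite muln1; nia.
  rewrite muln0 addn0.
  have nsub : ~~ (Y \subset 'C_Y[x]).
    apply/negP => sY; move/negP: xA; apply; rewrite inE xX /= -sub_cent1.
    by apply: subset_trans sY (subsetIr _ _).
  have le : (p <= #|Y : 'C_Y[x]|)%N.
    rewrite -pG; apply: pdiv_min_dvd; first by rewrite indexg_gt1.
    exact: dvdn_trans (dvdn_indexg _ _) (cardSg sYG).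
  rewrite -(Lagrange (subsetIl Y 'C[x])) mulnC.

  exact: leq_mul (leqnn _) le.
have lo : forall x, x \in X -> (#|Y| * (x \in A) <= #|Y :&: 'C[x]|)%N.
  move=> x xX; case xA: (x \in A); last by rewrite muln0.
  have : Y \subset 'C[x] by rewrite sub_cent1; move: xA; rewrite inE => /andP[].
  by move/setIidPl => ->; rewrite muln1.
have sA : (\sum_(x in X) (x \in A) = #|A|)%N.
  by rewrite -card_setI_sum (setIidPr sAX).
have U : (p * cnt X Y <= #|X| * #|Y| + (p - 1) * #|Y| * #|A|)%N.
  rewrite /cnt big_distrr /=.

  apply: leq_trans (leq_sum _ up) _.
  by rewrite big_split /= sum_nat_const -big_distrr /= sA.
have L : (#|Y| * #|A| <= cnt X Y)%N.
  rewrite -sA big_distrr /=; exact: leq_sum _ lo.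
have LA := Lagrange sAX.
have A0 : (0 < #|A|)%N by apply: cardG_gt0.
have Y0 : (0 < #|Y|)%N by apply: cardG_gt0.
have c0 : (0 < #|A| * #|Y|)%N by rewrite muln_gt0 A0 Y0.
have LA' : #|X| = (#|A| * #|X : A|)%N by rewrite -LA.
have E2 : (cnt X Y * p ^ 2 = p.*2.-1 * (#|A| * #|Y| * #|X : A|))%N.
  by rewrite E LA'; congr (_ * _)%N; rewrite mulnAC.
have U2 : (p * cnt X Y <= #|A| * #|Y| * #|X : A| + (p - 1) * (#|A| * #|Y|))%N.
  by rewrite LA' in U; move: U; rewrite (mulnAC #|A|) (mulnC #|A| #|Y|) -(mulnA (p-1)).
have L2 : (#|A| * #|Y| <= cnt X Y)%N by rewrite mulnC.
have /andP[a1 ap] := arith p1 c0 E2 U2 L2.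
have pa : (p <= #|X : A|)%N.
  rewrite -pG; apply: pdiv_min_dvd => //.
  exact: dvdn_trans (dvdn_indexg _ _) (cardSg sXG).
by apply/eqP; rewrite eqn_leq pa ap.
Qed.

Lemma lcomm1 (gT : finGroupType) (x y : gT) : lcomm x y = 1 <-> commute x y.
Proof.
rewrite /lcomm -mulgA -invMg; split.
  by move/eqP; rewrite -eq_mulgV1 => /eqP.
by move=> ->; rewrite mulgV.
Qed.

Lemma lcomm_pairing (gT : finGroupType) (H K : {set gT}) :
  exterior_pairing H K (@lcomm gT).
Proof.
split.
- move=> h h' k _ _ _; rewrite /lcomm /lconj.
  by rewrite !invMg !invgK !mulgA !(mulgKV, mulgK).
- move=> h k k' _ _ _; rewrite /lcomm /lconj.
  by rewrite !invMg !invgK !mulgA !(mulgKV, mulgK).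
- by move=> y _; rewrite /lcomm mulgK mulgV.
Qed.

Lemma pboolP (P : Prop) : pbool P = true <-> P.
Proof. by rewrite /pbool; case: excluded_middle_informative. Qed.

Lemma wedge_comm (gT : finGroupType) (G H K : {group gT}) (m : nat) h k :
  M_trivial G H K -> h \in H -> k \in K ->
  (wedge_trivial H K [:: (false, ((h ^+ m)%g, k))] <-> commute (h ^+ m) k).
Proof.
move=> MT hH kK; split.
  move=> W; have := W gT (@lcomm gT) (@lcomm_pairing gT H K).
  by rewrite /eval_word big_seq1 /= => /lcomm1.
move=> C; apply: MT.
  by move=> a; rewrite inE => /eqP -> /=; rewrite groupX.
by rewrite /eval_word big_seq1 /=; apply/lcomm1.
Qed.

Lemma card_S (gT : finGroupType) (G H K : {group gT}) (m : nat) :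
  (2 <= m)%N -> exponent H = m.-1 -> M_trivial G H K ->
  #|[set x in setX H K | pbool (wedge_trivial H K [:: (false, ((x.1 ^+ m)%g, x.2))])]|
  = cnt H K.
Proof.
move=> m2 eH MT.
have hm : forall h, h \in H -> h ^+ m = h.
  by move=> h hH; rewrite -(prednK (ltnW m2)) expgS -eH expg_exponent // mulg1.
transitivity #|[set u in setX H K | u.1 * u.2 == u.2 * u.1]|.
  apply: eq_card => -[h k]; rewrite !in_set /=.
  case hH: (h \in H) => //=; case kK: (k \in K) => //=.
  apply/idP/idP.
    by move/pboolP/(@wedge_comm gT G H K m h k MT hH kK); rewrite hm // => /eqP.
  move/eqP => c; apply/pboolP/(@wedge_comm gT G H K m h k MT hH kK); rewrite hm //.
rewrite -sum1_card (eq_bigl (fun u => (u.1 \in H) && ((u.2 \in K) && (u.1 * u.2 == u.2 * u.1)))); last first.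
  by move=> -[h k]; rewrite !in_set /= andbA.
rewrite -(pair_big_dep (fun x => x \in H) (fun x y => (y \in K) && (x * y == y * x)) (fun _ _ => 1%N)).
rewrite /cnt; apply: eq_bigr => x _; rewrite sum1_card; apply: eq_card => y; rewrite in_setI /=.
congr (_ && _); apply/eqP/idP.
  by move=> c; rewrite cent1C; apply/cent1P.
by rewrite cent1C => /cent1P.
Qed.

Theorem mainTheorem11 (gT : finGroupType) (G H K : {group gT}) (m : nat) :
  (2 <= m)%N -> H <| G -> K <| G -> exponent H = m.-1 ->
  (H * K)%g = G -> M_trivial G H K ->
  (forall p : nat, prime p ->
     dwedge m H K = ((p.*2.-1)%:R / (p ^ 2)%:R)%R ->
     p %| #|G| /\
     (pdiv #|G| = p ->
        [/\ #|H : 'C_H(K)| = p, #|K : 'C_K(H)| = p & H :!=: K]))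
  /\
  (dwedge m H K = (3%:R / 4%:R)%R ->
     #|H : 'C_H(K)| = 2 /\ #|K : 'C_K(H)| = 2).
Proof.
move=> m2 nHG nKG eH _ MT.
have Sc := @card_S gT G H K m m2 eH MT.
have sHG := normal_sub nHG; have sKG := normal_sub nKG.
have H0 : (0 < #|H|)%N by apply: cardG_gt0.
have K0 : (0 < #|K|)%N by apply: cardG_gt0.
have eqn : forall p, prime p -> dwedge m H K = ((p.*2.-1)%:R / (p ^ 2)%:R)%R ->
    (cnt H K * p ^ 2 = p.*2.-1 * (#|H| * #|K|))%N.
  move=> p pp; rewrite /dwedge Sc => /eqP.
  rewrite GRing.eqr_div; last first.
  - by rewrite pnatr_eq0 expn_eq0 andbT; apply/eqP => p0; move: pp; rewrite p0.
  - by rewrite pnatr_eq0 muln_eq0 negb_or -!lt0n H0 K0.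
  by rewrite -!natrM eqr_nat => /eqP.
have P1 : forall p : nat, prime p ->
     dwedge m H K = ((p.*2.-1)%:R / (p ^ 2)%:R)%R ->
     p %| #|G| /\
     (pdiv #|G| = p ->
        [/\ #|H : 'C_H(K)| = p, #|K : 'C_K(H)| = p & H :!=: K]).
  move=> p pp dw; have E := eqn p pp dw.
  have p1 := prime_gt1 pp.
  split.
    have : (p %| p.*2.-1 * (#|H| * #|K|))%N.
      by rewrite -E; apply: dvdn_mull; apply: dvdn_exp.
    rewrite Euclid_dvdM // => /orP[pd|].
      have e2 : (p.*2.-1 + 1 = p + p)%N by rewrite -addnn; lia.
      have : (p %| p.*2.-1 + 1)%N by rewrite e2 dvdn_addr.
      by rewrite dvdn_addr // dvdn1 => /eqP p1'; rewrite p1' in p1.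
    rewrite Euclid_dvdM // => /orP[] pd.
      exact: dvdn_trans pd (cardSg sHG).
    exact: dvdn_trans pd (cardSg sKG).
  move=> pG.
  have iH := @index_p gT G H K p sHG sKG pp pG E.
  have iK : #|K : 'C_K(H)| = p.
    by apply: (@index_p gT G K H p sKG sHG pp pG); rewrite cnt_sym E [(#|H| * _)%N]mulnC.
  split => //; apply/negP => /eqP eHK; move: iH; rewrite -eHK => iH.
  have : abelian H.
    apply: cyclic_center_factor_abelian; apply: prime_cyclic.
    by rewrite card_quotient ?(normal_norm (center_normal H)) // iH.
  move/center_idP => zH; move: iH.
  have -> : 'C_H(H) = 'Z(H) by [].
  by rewrite zH indexgg => p1'; rewrite -p1' in p1.
split => // dw.
have dw2 : dwedge m H K = (((2.*2).-1)%:R / (2 ^ 2)%:R)%R.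
  by rewrite dw; have -> : ((2.*2).-1 = 3)%N by []; have -> : (2 ^ 2 = 4)%N by [].
have [d2 P2] := P1 2 (erefl _) dw2.
have G0 : (0 < #|G|)%N by apply: cardG_gt0.
have G1 : (1 < #|G|)%N by apply: leq_trans (dvdn_leq G0 d2).
have pd : pdiv #|G| = 2.
  apply/eqP; rewrite eqn_leq pdiv_min_dvd //=.
  exact: prime_gt1 (pdiv_prime G1).
by have [-> -> _] := P2 pd.
Qed.
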